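(* Let $S(n)=(3n+1)/2^{v_2(3n+1)}$ be the odd-to-odd Syracuse map. Let $n=64q+57$ with $q\equiv 3\pmod 8$, and write $q=8m+3$ ($m\ge 0$ an integer), so $n=512m+249$. Then $S^k(n)\not\equiv 57\pmod{64}$ for $k=1,2,3,4$. Consequently, the minimum number of odd-to-odd steps needed to return to the residue class $57\bmod 64$ from this branch is at least $5$.
   Context: $v_2$ is the $2$-adic valuation; $S^k$ is the $k$-th iterate. *)

(* Defs.v *)
From mathcomp Require Import all_boot.

Definition syracuse (n : nat) : nat := (3 * n + 1) %/ 2 ^ (logn 2 (3 * n + 1)).

Definition syracuse_iter (k n : nat) : nat := iter k syracuse n.

(* Main.v *)
Require Import Defs.
From mathcomp Require Import all_boot.
From mathcomp Require Import zify.

Lemma syr_eq n k y : 3 * n + 1 = 2 ^ k * y -> odd y -> syracuse n = y.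
Proof.
move=> H Hy; rewrite /syracuse H.
have y0 : 0 < y by move: Hy; case: (y).
rewrite lognM ?expn_gt0 // pfactorK // logn_coprime ?addn0 ?coprime2n //.
by rewrite mulKn ?expn_gt0.
Qed.

Theorem mainTheorem7 (q m n : nat) :
  n = 64 * q + 57 -> q = 8 * m + 3 ->
  n = 512 * m + 249 /\
  (forall k, 1 <= k <= 4 -> syracuse_iter k n %% 64 != 57).
Proof.
move=> -> ->; split; first lia.
have E1 : syracuse (64 * (8 * m + 3) + 57) = 384 * m + 187.
  apply: (@syr_eq _ 2); first lia.
  by rewrite oddD oddM.
have E2 : syracuse (384 * m + 187) = 576 * m + 281.
  apply: (@syr_eq _ 1); first lia.
  by rewrite oddD oddM.
have E3 : syracuse (576 * m + 281) = 432 * m + 211.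
  apply: (@syr_eq _ 2); first lia.
  by rewrite oddD oddM.
have E4 : syracuse (432 * m + 211) = 648 * m + 317.
  apply: (@syr_eq _ 1); first lia.
  by rewrite oddD oddM.
case=> [|[|[|[|[|k]]]]] Hk; rewrite /syracuse_iter; try by [].
- rewrite [iter _ _ _]/= E1; apply/eqP; lia.
- rewrite [iter _ _ _]/= E1 E2; apply/eqP; lia.
- rewrite [iter _ _ _]/= E1 E2 E3; apply/eqP; lia.
- rewrite [iter _ _ _]/= E1 E2 E3 E4; apply/eqP; lia.
Qed.
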